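(* Let $K\in\{\mathbb R,\mathbb C,\mathbb H\}$ and let $(E,d)$ be a metric vector space over $K$ such that $d$ is $C_0$-translation invariant and $(C_1,C_2,C_3)$-lipschitz multiplicative. Let $d_0(x,y)=\int_{\mathbb U}d(ux,uy)\,d\mu(u)$, $\delta(x,y)=\lim_{n\to\infty}\frac1n d(nx,ny)$ and $\delta_0(x,y)=\lim_{n\to\infty}\frac1n d_0(nx,ny)$. Then $\delta$ and $\delta_0$ are $C_0$-translation invariant.
   Context: A metric vector space is a topological vector space over $K$ whose topology is generated by the metric $d$. $\mathbb U=\{u\in K:|u|=1\}$, $\mu$ the right-invariant Haar probability measure on $\mathbb U$. A function $\rho$ on $E\times E$ is $C_0$-translation invariant if $\rho(x+z,y+z)\le \rho(x,y)+C_0$ for all $x,y,z$. $(C_1,C_2,C_3)$-lipschitz multiplicative ($C_1\ge1$, $C_2,C_3\ge0$) means $C_1^{-1}|\lambda|d(x,y)-C_2|\lambda|-C_3\le d(\lambda x,\lambda y)\le C_1|\lambda|d(x,y)+C_2|\lambda|+C_3$ for all $\lambda\in K$, $x,y\in E$. (Under these hypotheses the limits defining $\delta,\delta_0$ exist.) *)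

(* Defs.v *)
From HB Require Import structures.
From mathcomp Require Import all_boot all_order all_algebra all_field.
From mathcomp Require Import all_classical all_reals all_analysis.
Set Implicit Arguments. Unset Strict Implicit. Unset Printing Implicit Defensive.
Import Order.TTheory GRing.Theory Num.Theory numFieldNormedType.Exports.
Local Open Scope ring_scope.
Local Open Scope classical_set_scope.

(* The scalar division algebra K.  K is a finite-dimensional associative   *)
(* unital algebra over the reals R ('falgType R') in which every nonzero   *)
(* element is invertible, equipped with an absolute value nK extending the *)
(* absolute value of R.  By Frobenius' theorem (and uniqueness of the      *)
(* absolute value) these are exactly R, C and H with their usual modulus.  *)
Definition is_division_algebra (R : realType) (K : falgType R) : Prop :=
  forall x : K, x != 0 -> x \is a GRing.unit.

Definition is_absolute_value (R : realType) (K : falgType R) (nK : K -> R) : Prop :=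
  [/\ forall x, 0 <= nK x,
      forall x, nK x = 0 <-> x = 0,
      forall x y, nK (x * y) = nK x * nK y,
      forall x y, nK (x + y) <= nK x + nK y
    & forall (a : R) x, nK (a *: x) = `|a| * nK x].

Definition unit_sphere (R : realType) (K : falgType R) (nK : K -> R) : set K :=
  [set u | nK u = 1].

(* K as a pointed type (point 0), needed to build the generated sigma-algebra *)
Definition Kpt (R : realType) (K : falgType R) : Type := K.
HB.instance Definition _ (R : realType) (K : falgType R) := Choice.on (Kpt K).
HB.instance Definition _ (R : realType) (K : falgType R) :=
  isPointed.Build (Kpt K) (0 : K).

Definition K_open (R : realType) (K : falgType R) (nK : K -> R) : set (set (Kpt K)) :=
  [set A | forall a : K, A a -> exists e : R, 0 < e /\ forall b : K, nK (b - a) < e -> A b].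

Notation K_borel nK := (g_sigma_algebraType (K_open nK)).

(* mu is the right-invariant Haar probability measure on U, viewed as a    *)
(* Borel probability measure on K concentrated on U.                       *)
Definition is_right_haar_on_U (R : realType) (K : falgType R) (nK : K -> R)
    (mu : probability (K_borel nK) R) : Prop :=
  mu (unit_sphere nK) = 1%E /\
  forall u : K, unit_sphere nK u ->
    forall A : set (K_borel nK), measurable A ->
      mu ((fun v : K_borel nK => ((v : K) * u : K) : K_borel nK) @^-1` A) = mu A.

Definition is_metric (T : Type) (R : realType) (d : T -> T -> R) : Prop :=
  [/\ forall x y, 0 <= d x y,
      forall x y, d x y = 0 <-> x = y,
      forall x y, d x y = d y x
    & forall x y z, d x z <= d x y + d y z].

Definition metric_vector_space (R : realType) (K : falgType R) (nK : K -> R)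
    (E : lmodType K) (d : E -> E -> R) : Prop :=
  [/\ is_metric d,
      forall (x y : E) (e : R), 0 < e -> exists r : R, 0 < r /\
        forall x' y', d x x' < r -> d y y' < r -> d (x + y) (x' + y') < e
    & forall (a : K) (x : E) (e : R), 0 < e -> exists r : R, 0 < r /\
        forall a' x', nK (a - a') < r -> d x x' < r -> d (a *: x) (a' *: x') < e].

Definition translation_invariant (R : realType) (K : falgType R) (E : lmodType K)
    (C0 : R) (rho : E -> E -> R) : Prop :=
  forall x y z : E, rho (x + z) (y + z) <= rho x y + C0.

Definition lipschitz_multiplicative (R : realType) (K : falgType R) (nK : K -> R)
    (E : lmodType K) (C1 C2 C3 : R) (d : E -> E -> R) : Prop :=
  [/\ 1 <= C1, 0 <= C2, 0 <= C3 &
      forall (l : K) (x y : E),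
        C1^-1 * nK l * d x y - C2 * nK l - C3 <= d (l *: x) (l *: y) /\
        d (l *: x) (l *: y) <= C1 * nK l * d x y + C2 * nK l + C3].

Definition d0 (R : realType) (K : falgType R) (nK : K -> R)
    (mu : probability (K_borel nK) R) (E : lmodType K) (d : E -> E -> R)
    (x y : E) : R :=
  fine (\int[mu]_(u in unit_sphere nK) (d ((u : K) *: x) ((u : K) *: y))%:E)%E.

Definition homogenization (R : realType) (K : falgType R) (E : lmodType K)
    (rho : E -> E -> R) (x y : E) : R :=
  limn (fun n : nat => rho (x *+ n) (y *+ n) / n%:R).

(* Main.v *)
Require Import Defs.
From HB Require Import structures.
From mathcomp Require Import all_boot all_order all_algebra all_field.
From mathcomp Require Import all_classical all_reals all_analysis.
From mathcomp Require Import lra measurable_realfun.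
Import Order.TTheory GRing.Theory Num.Theory numFieldNormedType.Exports.
Local Open Scope ring_scope.
Local Open Scope classical_set_scope.

Section Fek.
Variable R : realType.

Lemma iter_sub (b : nat -> R) (m : nat) :
  (forall k, b (m + k)%N <= b m + b k) ->
  forall q r, b (q * m + r)%N <= q%:R * b m + b r.
Proof.
move=> hb; elim=> [|q IH] r; first by rewrite mul0n add0n mul0r add0r.
rewrite mulSn -addnA (le_trans (hb _)) // mulrSr mulrDl mul1r.
by move: (IH r); lra.
Qed.

Lemma fekete (a : nat -> R) (c : R) : (forall n, 0 <= a n) -> 0 <= c ->
  (forall m n, a (m + n)%N <= a m + a n + c) ->
  cvgn (fun n => a n / n%:R).
Proof.
move=> a0 c0 hsub.
pose b n := a n + c.
have b0 n : 0 <= b n by rewrite /b addr_ge0.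
have hb m k : b (m + k)%N <= b m + b k.
  by rewrite /b; move: (hsub m k); lra.
pose S := [set x : R | exists2 n, (0 < n)%N & x = b n / n%:R].
have Sne : nonempty S by exists (b 1%N / 1%:R); exists 1%N.
have Slb : lbound S 0 by move=> _ [n _ ->]; rewrite divr_ge0.
have hlb : has_lbound S by exists 0.
pose L := inf S.
apply/cvg_ex; exists L.
apply/cvgrPdist_lt => eps eps0.
have eps20 : 0 < eps / 2 by rewrite divr_gt0.
have [_ [m m0 ->] hm] := inf_adherent eps20 (conj Sne hlb).
pose B := \sum_(r < m) b r.
have B0 : 0 <= B by rewrite sumr_ge0.
have hB r : (r < m)%N -> b r <= B.
  move=> hr; rewrite /B (bigD1 (Ordinal hr)) //= lerDl sumr_ge0 //.
near=> n.
have hn : 2 * (B + c) / eps < n%:R.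
  near: n; exact: nbhs_infty_gtr.
have n0 : 0 < n%:R :> R.
  apply: le_lt_trans hn; rewrite divr_ge0 ?mulr_ge0 ?addr_ge0 // ltW //.
have hn' : 2 * (B + c) < eps * n%:R.
  by move: hn; rewrite ltr_pdivrMr // [eps * _]mulrC.
have m0' : 0 < m%:R :> R by rewrite ltr0n.
have Lle : L <= b n / n%:R.
  by apply: ge_inf => //; exists n => //; rewrite -(ltr0n R).
have hq := @iter_sub b m (hb m) (n %/ m) (n %% m).
rewrite -divn_eq in hq.
have hBr := hB _ (ltn_pmod n m0).
have qmn : ((n %/ m) * m)%:R <= n%:R :> R by rewrite ler_nat leq_divM.
have hq2 : (n %/ m)%:R * b m <= n%:R * (b m / m%:R).
  rewrite -[X in X * b m](@mulfK _ m%:R) ?gt_eqF // -natrM.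
  rewrite mulrAC -mulrA; apply: ler_wpM2r => //.
  by rewrite divr_ge0.
have hbn : b n <= n%:R * (b m / m%:R) + B by lra.
have hbn' : b n / n%:R <= b m / m%:R + B / n%:R.
  by rewrite ler_pdivrMr // mulrDl divfK ?gt_eqF // mulrC.
have hBn : B / n%:R <= eps / 2.
  rewrite ler_pdivrMr //; nra.
have hcn : c / n%:R < eps / 2.
  rewrite ltr_pdivrMr //; nra.
have an : a n / n%:R = b n / n%:R - c / n%:R by rewrite /b mulrDl addrK.
rewrite an; rewrite ltr_norml; apply/andP; split.
  have : 0 <= c / n%:R by rewrite divr_ge0 // ltW.
  lra.
lra.
Unshelve. all: by end_near.
Qed.
End Fek.

Lemma homog_ti (R : realType) (K : falgType R) (E : lmodType K) (C0 : R)
  (rho : E -> E -> R) :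
  (forall x y, 0 <= rho x y) -> (forall x y z, rho x z <= rho x y + rho y z) ->
  translation_invariant C0 rho -> translation_invariant C0 (homogenization rho).
Proof.
move=> r0 tri ti.
have C00 : 0 <= C0 by have := ti 0 0 0; rewrite !addr0; lra.
have hcv x y : cvgn (fun n => rho (x *+ n) (y *+ n) / n%:R).
  apply: (@fekete R _ (2 * C0)) => //; first by rewrite mulr_ge0.
  move=> m n.
  rewrite !mulrnDr.
  have h1 := tri (x *+ m + x *+ n) (y *+ m + x *+ n) (y *+ m + y *+ n).
  have h2 := ti (x *+ m) (y *+ m) (x *+ n).
  have h3 := ti (x *+ n) (y *+ n) (y *+ m).
  rewrite [x *+ n + _]addrC [y *+ n + _]addrC in h3.
  lra.
move=> x y z; rewrite /homogenization.
have hc : (fun n => rho (x *+ n) (y *+ n) / n%:R + C0) @ \oo -->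
    limn (fun n => rho (x *+ n) (y *+ n) / n%:R) + C0.
  by apply: cvgD; [exact: hcv| exact: cvg_cst].
rewrite -(cvg_lim _ hc) //.
apply: ler_lim; [exact: hcv| exact: (cvgP _ hc)|].
near=> n.
rewrite !mulrnDl.
have h := ti (x *+ n) (y *+ n) (z *+ n).
have [n0|npos] := eqVneq n 0%N; first by rewrite n0 invr0 !mulr0 add0r.
have n0 : 0 < n%:R :> R by rewrite ltr0n lt0n.
have : C0 / n%:R <= C0.
  have : 1 <= n%:R :> R by rewrite ler1n lt0n.
  rewrite ler_pdivrMr //; nra.
have : rho (x *+ n + z *+ n) (y *+ n + z *+ n) / n%:R <=
   (rho (x *+ n) (y *+ n) + C0) / n%:R.
  by rewrite ler_pM2r ?invr_gt0.
rewrite mulrDl; lra.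
Unshelve. all: by end_near.
Qed.

Section Meas.
Variables (R : realType) (K : falgType R) (nK : K -> R).
Hypothesis habs : is_absolute_value nK.

Definition kcont (f : K -> R) := forall a e, 0 < e -> exists r, 0 < r /\
  forall b, nK (b - a) < r -> `|f b - f a| < e.

Lemma nKN x : nK (- x) = nK x.
Proof.
case: habs => _ _ _ _ hs.
by rewrite -scaleN1r hs normrN normr1 mul1r.
Qed.

Lemma nK_cont : kcont nK.
Proof.
case: habs => h0 _ _ htri _.
move=> a e e0; exists e; split => // b hb.
have h1 := htri (b - a) a; rewrite subrK in h1.
have h2 := htri (a - b) b; rewrite subrK -opprB nKN in h2.
rewrite ltr_norml; apply/andP; split; lra.
Qed.

Lemma open_gt (f : K -> R) c : kcont f -> K_open nK [set u | c < f u].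
Proof.
move=> fc a /= ha.
have [r [r0 hr]] := fc a (f a - c) (ltac:(by rewrite subr_gt0)).
exists r; split => // b /hr; rewrite ltr_norml => /andP[h _]; lra.
Qed.

Lemma open_lt (f : K -> R) c : kcont f -> K_open nK [set u | f u < c].
Proof.
move=> fc a /= ha.
have [r [r0 hr]] := fc a (c - f a) (ltac:(by rewrite subr_gt0)).
exists r; split => // b /hr; rewrite ltr_norml => /andP[_ h]; lra.
Qed.

Lemma kcont_meas (f : K_borel nK -> R) : kcont f -> measurable_fun setT f.
Proof.
move=> fc.
apply: (@measurability _ _ _ _ setT f (R.-ocitv.-measurable)) => //.
move=> _ [_ [[x1 x2] _ <-] <-].
have -> : setT `&` f @^-1` `]x1, x2]%classic =
    [set u | x1 < f u] `&` ~` [set u | x2 < f u].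
  apply/seteqP; split => u /=; rewrite in_itv /=.
    by move=> [_ /andP[h1 h2]]; split => //; apply/negP; rewrite -leNgt.
  by move=> [h1 /negP h2]; split => //; rewrite h1 /= leNgt.
apply: measurableI; first by apply: sub_sigma_algebra; exact: open_gt.
by apply: measurableC; apply: sub_sigma_algebra; exact: open_gt.
Qed.

End Meas.

Section Meas2.
Variables (R : realType) (K : falgType R) (nK : K -> R).
Hypothesis habs : is_absolute_value nK.
Variables (E : lmodType K) (d : E -> E -> R).
Hypothesis hE : metric_vector_space nK d.

Lemma meas_U : measurable (unit_sphere nK : set (K_borel nK)).
Proof.
have -> : (unit_sphere nK : set (K_borel nK)) =
    ~` ([set u | nK u < 1] `|` [set u | 1 < nK u]).
  apply/seteqP; split => u /=.
    by rewrite /unit_sphere /= => ->; rewrite ltxx; case.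
  move=> h; apply/eqP; rewrite eq_le !leNgt; apply/andP; split; apply/negP => h';
  apply: h; by [right|left].
apply: measurableC; apply: measurableU; apply: sub_sigma_algebra.
  by apply: open_lt; exact: nK_cont.
by apply: open_gt; exact: nK_cont.
Qed.

Lemma g_cont (x y : E) : @kcont R K nK (fun u => d (u *: x) (u *: y)).
Proof.
case: hE => [[d0 d00 dsym dtri] _ hsc].
move=> a e e0.
have e20 : 0 < e / 2 by rewrite divr_gt0.
have [r1 [r10 h1]] := hsc a x _ e20.
have [r2 [r20 h2]] := hsc a y _ e20.
exists (Num.min r1 r2); split; first by rewrite lt_min r10 r20.
move=> b; rewrite lt_min => /andP[hb1 hb2].
have hab : nK (a - b) = nK (b - a) by rewrite -opprB nKN.
have hx : d (a *: x) (b *: x) < e / 2.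
  by apply: h1; [rewrite hab | have /d00 -> : x = x by []].
have hy : d (a *: y) (b *: y) < e / 2.
  by apply: h2; [rewrite hab | have /d00 -> : y = y by []].
have t1 := dtri (b *: x) (a *: x) (b *: y).
have t2 := dtri (a *: x) (a *: y) (b *: y).
have t3 := dtri (a *: x) (b *: x) (a *: y).
have t4 := dtri (b *: x) (b *: y) (a *: y).
rewrite (dsym (b *: x) (a *: x)) in t1.
rewrite (dsym (b *: y) (a *: y)) in t4.
rewrite ltr_norml; apply/andP; split; lra.
Qed.

End Meas2.

Set Implicit Arguments. Unset Strict Implicit.

Section Int.
Variables (R : realType) (K : falgType R) (nK : K -> R).
Hypothesis habs : is_absolute_value nK.
Variable mu : probability (K_borel nK) R.
Hypothesis hmu : is_right_haar_on_U mu.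

Let U : set (K_borel nK) := unit_sphere nK.

Lemma int_fin (f : K_borel nK -> R) M : measurable_fun setT f ->
  (forall u, U u -> 0 <= f u <= M) ->
  (\int[mu]_(u in U) (f u)%:E)%E = (fine (\int[mu]_(u in U) (f u)%:E))%:E.
Proof.
move=> mf hb.
have mU : measurable U by exact: meas_U.
have i0 : (0 <= \int[mu]_(u in U) (f u)%:E)%E.
  by apply: integral_ge0 => u /hb /andP[h _]; rewrite lee_fin.
rewrite fineK // ge0_fin_numE //.
apply: (@le_lt_trans _ _ (\int[mu]_(u in U) (cst M%:E) u)%E).
  apply: ge0_le_integral => //.
  - by move=> u /hb /andP[h _]; rewrite lee_fin.
  - by apply/measurable_EFinP; exact: measurable_funTS.
  - by move=> u /hb /andP[_ h]; rewrite lee_fin.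
have hU : mu U = 1%E := proj1 hmu.
rewrite integral_cst //.
set m := (X in (_ * X)%E).
have -> : m = 1%E by rewrite /m; case: hmu => h _; exact: h.
rewrite mule1; exact: ltry.
Qed.

Lemma int_le (f h1 h2 : K_borel nK -> R) M1 M2 M3 :
  measurable_fun setT f -> measurable_fun setT h1 -> measurable_fun setT h2 ->
  (forall u, U u -> 0 <= f u <= M1) ->
  (forall u, U u -> 0 <= h1 u <= M2) ->
  (forall u, U u -> 0 <= h2 u <= M3) ->
  (forall u, U u -> f u <= h1 u + h2 u) ->
  fine (\int[mu]_(u in U) (f u)%:E)%E <=
  fine (\int[mu]_(u in U) (h1 u)%:E)%E + fine (\int[mu]_(u in U) (h2 u)%:E)%E.
Proof.
move=> mf mh1 mh2 bf bh1 bh2 hle.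
have mU : measurable U by exact: meas_U.
rewrite -lee_fin EFinD -(int_fin mf bf) -(int_fin mh1 bh1) -(int_fin mh2 bh2).
have mE (g : K_borel nK -> R) : measurable_fun setT g ->
    measurable_fun U (fun u => (g u)%:E).
  by move=> mg; apply/measurable_EFinP; exact: measurable_funTS.
have p0 (g : K_borel nK -> R) M : (forall u, U u -> 0 <= g u <= M) ->
    forall u, U u -> (0 <= (g u)%:E)%E.
  by move=> hg u /hg /andP[h _]; rewrite lee_fin.
rewrite -ge0_integralD //.
all: try exact: p0 bh1.
all: try exact: p0 bh2.
all: try exact: mE.
apply: ge0_le_integral => //.
all: try exact: p0 bf.
all: try exact: mE.
all: try (by apply: emeasurable_funD; exact: mE).
all: try (by move=> u /hle; rewrite lee_fin).

Qed.

End Int.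


Unset Implicit Arguments. Set Strict Implicit.
Theorem lemma3 (R : realType) (K : falgType R) (nK : K -> R)
    (hdiv : is_division_algebra K) (habs : is_absolute_value nK)
    (mu : probability (K_borel nK) R) (hmu : is_right_haar_on_U mu)
    (E : lmodType K) (d : E -> E -> R) (C0 C1 C2 C3 : R)
    (hE : metric_vector_space nK d)
    (hC0 : translation_invariant C0 d)
    (hlip : lipschitz_multiplicative nK C1 C2 C3 d) :
  translation_invariant C0 (homogenization d) /\
  translation_invariant C0 (homogenization (d0 mu d)).
Proof.
have [[dge0 d00 dsym dtri] _ _] := hE.
have C00 : 0 <= C0 by have := hC0 0 0 0; rewrite !addr0; lra.
split; first exact: homog_ti.
pose g (x y : E) := fun u : K_borel nK => d ((u : K) *: x) ((u : K) *: y).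
have mg x y : measurable_fun setT (g x y).
  by apply: kcont_meas; exact: g_cont.
have bg x y : forall u, unit_sphere nK u -> 0 <= g x y u <= C1 * d x y + C2 + C3.
  move=> u hu; rewrite dge0 /=.
  have [_ _ _ hl] := hlip.
  by have [_ h] := hl u x y; move: h; rewrite /unit_sphere /= in hu; rewrite hu !mulr1.
have mc : measurable_fun setT (fun _ : K_borel nK => C0) by exact: measurable_cst.
have bc : forall u : K_borel nK, unit_sphere nK u -> 0 <= (fun _ => C0) u <= C0.
  by move=> u _; rewrite C00 lexx.
have intc : fine (\int[mu]_(u in unit_sphere nK) ((fun _ : K_borel nK => C0) u)%:E)%E = C0.
  rewrite integral_cst; last exact: meas_U.
  set m := (X in (_ * X)%E).
  have -> : m = 1%E by rewrite /m; case: hmu => h _; exact: h.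
  by rewrite mule1.
apply: homog_ti.
- move=> x y; apply: fine_ge0; apply: integral_ge0 => u /(bg x y) /andP[h _].
  by rewrite lee_fin.
- move=> x y z; rewrite /d0.
  apply: (int_le habs hmu (mg x z) (mg x y) (mg y z) (bg x z) (bg x y) (bg y z)).
  move=> u _; exact: dtri.
- move=> x y z; rewrite /d0 -[X in _ <= _ + X]intc.
  apply: (int_le habs hmu (mg (x + z) (y + z)) (mg x y) mc (bg _ _) (bg x y) bc).
  by move=> u _; rewrite /g !scalerDr; exact: hC0.
Qed.
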